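(* Let $H$ be a real Hilbert space, let $D\subseteq H$ be a nonempty closed convex set, and let $T_1,\dots,T_m:D\to D$ be firmly nonexpansive operators with $F:=\bigcap_{i=1}^m\mathrm{Fix}(T_i)\neq\emptyset$. Let $\mathcal{M}'$ be a finite nonempty subset of $\mathcal{M}$, enumerated as $S_1,\dots,S_N$ with $N=|\mathcal{M}'|$ and $S_r=(\Omega_r,w_r)$, and set $T_{S_r}:=\sum_{t\in\Omega_r}w_r(t)T[t]$. Let $\hat w_1,\dots,\hat w_N$ be strictly positive reals with $\sum_{r=1}^N\hat w_r=1$, let $(\lambda_k)_{k\in\mathbb{N}}$ be a steering sequence, and let $u,x^0\in D$. Then the sequence defined by $$x^{k+1}=\lambda_k u+(1-\lambda_k)\sum_{r=1}^N\hat w_r\,T_{S_r}(x^k),\quad k\ge0,$$ converges strongly to $P_F(u)$.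
   Context: An operator $T:D\to H$ is firmly nonexpansive if $\|T(x)-T(y)\|^2\le\langle x-y,T(x)-T(y)\rangle$ for all $x,y\in D$. $\mathrm{Fix}(T)=\{x\in D: T(x)=x\}$; $P_F$ is the metric projection onto $F$. An index vector is a finite tuple $t=(t_1,\dots,t_q)$ with each $t_\ell\in\{1,\dots,m\}$; the string operator is $T[t]:=T_{t_q}T_{t_{q-1}}\cdots T_{t_1}$. A finite set $\Omega$ of index vectors is fit if every $i\in\{1,\dots,m\}$ appears as a component of some $t\in\Omega$. $\mathcal{M}$ denotes the collection of all pairs $(\Omega,w)$ where $\Omega$ is a fit finite set of index vectors and $w:\Omega\to(0,1]$ satisfies $\sum_{t\in\Omega}w(t)=1$. A steering sequence is a real sequence $(\lambda_k)_{k\in\mathbb{N}}$ with $\lambda_k\in[0,1]$ for all $k$, $\lim_{k\to\infty}\lambda_k=0$, $\sum_{k=0}^\infty\lambda_k=+\infty$, and $\sum_{k=0}^\infty|\lambda_{k+1}-\lambda_k|<\infty$. *)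

(* Defs.v *)
From HB Require Import structures.
From mathcomp Require Import all_boot all_order all_algebra.
From mathcomp Require Import all_classical all_reals all_analysis.
Set Implicit Arguments. Unset Strict Implicit. Unset Printing Implicit Defensive.
Import Order.TTheory GRing.Theory Num.Theory.
Import numFieldNormedType.Exports.
Local Open Scope classical_set_scope.
Local Open Scope ring_scope.

(* A real Hilbert space is a complete normed space V over R (a realType)
   whose norm comes from an inner product [ip]: symmetric, linear in the
   first argument, and ip x x = |x|^2. *)
Definition is_inner_product (R : realType) (V : normedModType R)
  (ip : V -> V -> R) : Prop :=
  [/\ (forall x y, ip x y = ip y x),
      (forall x y z, ip (x + y) z = ip x z + ip y z),
      (forall (a : R) x y, ip (a *: x) y = a * ip x y)
    & (forall x, ip x x = `|x| ^+ 2)].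

Definition convex_subset (R : realType) (V : normedModType R) (D : set V) : Prop :=
  forall x y (t : R), D x -> D y -> 0 <= t <= 1 -> D (t *: x + (1 - t) *: y).

Definition maps_into (R : realType) (V : normedModType R) (D : set V)
  (T : V -> V) : Prop := forall x, D x -> D (T x).

Definition firmly_nonexpansive (R : realType) (V : normedModType R)
  (ip : V -> V -> R) (D : set V) (T : V -> V) : Prop :=
  forall x y, D x -> D y -> `|T x - T y| ^+ 2 <= ip (x - y) (T x - T y).

Definition Fix (R : realType) (V : normedModType R) (D : set V)
  (T : V -> V) : set V := [set x | D x /\ T x = x].

Definition common_fix (R : realType) (V : normedModType R) (m : nat)
  (D : set V) (T : 'I_m -> V -> V) : set V :=
  [set x | D x /\ forall i, Fix D (T i) x].

(* string operator T[t] = T_{t_q} ... T_{t_1}  (T_{t_1} applied first) *)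
Definition string_op (R : realType) (V : normedModType R) (m : nat)
  (T : 'I_m -> V -> V) (t : seq 'I_m) (x : V) : V :=
  foldl (fun y i => T i y) x t.

(* index vectors are nonempty finite tuples with entries in {1..m}
   (represented as 'I_m); Omega is a finite set of index vectors
   (duplicate-free list) that is fit. *)
Definition fit (m : nat) (Omega : seq (seq 'I_m)) : Prop :=
  forall i : 'I_m, exists2 t, t \in Omega & i \in t.

Definition in_M (R : realType) (m : nat) (Omega : seq (seq 'I_m))
  (w : seq 'I_m -> R) : Prop :=
  [/\ uniq Omega, (forall t, t \in Omega -> (0 < size t)%N), fit Omega,
      (forall t, t \in Omega -> 0 < w t <= 1)
    & \sum_(t <- Omega) w t = 1].

Definition same_pair (R : realType) (m : nat) (Omega Omega' : seq (seq 'I_m))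
  (w w' : seq 'I_m -> R) : Prop :=
  perm_eq Omega Omega' /\ (forall t, t \in Omega -> w t = w' t).

Definition T_S (R : realType) (V : normedModType R) (m : nat)
  (T : 'I_m -> V -> V) (Omega : seq (seq 'I_m)) (w : seq 'I_m -> R)
  (x : V) : V :=
  \sum_(t <- Omega) w t *: string_op T t x.

Definition steering (R : realType) (lam : nat -> R) : Prop :=
  [/\ (forall k, 0 <= lam k <= 1),
      lam @ \oo --> (0 : R),
      (\sum_(0 <= k < n) lam k) @[n --> \oo] --> +oo
    & cvg ((\sum_(0 <= k < n) `|lam k.+1 - lam k|) @[n --> \oo])].

Definition is_metric_proj (R : realType) (V : normedModType R) (F : set V)
  (u p : V) : Prop :=
  F p /\ forall y, F y -> `|u - p| <= `|u - y|.

(* Main.v *)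
Require Import Defs.
From HB Require Import structures.
From mathcomp Require Import all_boot all_order all_algebra.
From mathcomp Require Import all_classical all_reals all_analysis.
From mathcomp Require Import ring lra.
Import Order.TTheory GRing.Theory Num.Theory.
Import numFieldNormedType.Exports.
Local Open Scope classical_set_scope.
Local Open Scope ring_scope.

Section Hilbert.
Context {R : realType} {V : normedModType R} {ip : V -> V -> R}.
Hypothesis hip : is_inner_product ip.

Lemma ipC x y : ip x y = ip y x. Proof. by case: hip. Qed.
Lemma ipDl x y z : ip (x + y) z = ip x z + ip y z. Proof. by case: hip. Qed.
Lemma ipZl a x y : ip (a *: x) y = a * ip x y. Proof. by case: hip. Qed.
Lemma ipxx x : ip x x = `|x| ^+ 2. Proof. by case: hip. Qed.
Lemma ipDr x y z : ip x (y + z) = ip x y + ip x z.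
Proof. by rewrite ipC ipDl ![ip _ x]ipC. Qed.
Lemma ipZr a x y : ip x (a *: y) = a * ip x y.
Proof. by rewrite ipC ipZl ipC. Qed.
Lemma ipNl x y : ip (- x) y = - ip x y.
Proof. by rewrite -scaleN1r ipZl mulN1r. Qed.
Lemma ipNr x y : ip x (- y) = - ip x y.
Proof. by rewrite ipC ipNl ipC. Qed.
Lemma ipBl x y z : ip (x - y) z = ip x z - ip y z.
Proof. by rewrite ipDl ipNl. Qed.
Lemma ipBr x y z : ip x (y - z) = ip x y - ip x z.
Proof. by rewrite ipDr ipNr. Qed.
Lemma ip0l y : ip 0 y = 0.
Proof. by rewrite -(scale0r 0) ipZl mul0r. Qed.

Lemma normD2 x y : `|x + y| ^+ 2 = `|x| ^+ 2 + 2 * ip x y + `|y| ^+ 2.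
Proof. rewrite -!ipxx ipDl !ipDr (ipC y x); ring. Qed.
Lemma normB2 x y : `|x - y| ^+ 2 = `|x| ^+ 2 - 2 * ip x y + `|y| ^+ 2.
Proof. by rewrite normD2 ipNr normrN; ring. Qed.

Lemma cs x y : ip x y <= `|x| * `|y|.
Proof.
have h1 := normD2 x y.
have h2 : `|x + y| <= `|x| + `|y| := ler_normD x y.
have h3 : 0 <= `|x + y| := normr_ge0 _.
have h4 : 0 <= `|x| := normr_ge0 _.
have h5 : 0 <= `|y| := normr_ge0 _.
nra.
Qed.

Lemma cs' x y : - (`|x| * `|y|) <= ip x y.
Proof. have := cs (- x) y; rewrite ipNl normrN; lra. Qed.

Lemma ip_suml (I : Type) (s : seq I) (F : I -> V) z :
  ip (\sum_(i <- s) F i) z = \sum_(i <- s) ip (F i) z.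
Proof.
elim: s => [|a s IH]; first by rewrite !big_nil ip0l.
by rewrite !big_cons ipDl IH.
Qed.

End Hilbert.
Section Weighted.
Context {R : realType} {V : normedModType R} {ip : V -> V -> R}.
Hypothesis hip : is_inner_product ip.
Context {I : eqType} {s : seq I} {c : I -> R}.
Hypothesis cpos : forall i, i \in s -> 0 < c i.
Hypothesis csum : \sum_(i <- s) c i = 1.

Lemma wsum_ge0 (g : I -> R) : (forall i, i \in s -> 0 <= g i) ->
  0 <= \sum_(i <- s) c i * g i.
Proof.
move=> g0; rewrite big_seq; apply: sumr_ge0 => i si.
by rewrite mulr_ge0 // ?g0 // ltW // cpos.
Qed.

Lemma wsum_le0 (g : I -> R) : (forall i, i \in s -> 0 <= g i) ->
  \sum_(i <- s) c i * g i <= 0 -> forall i, i \in s -> g i <= 0.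
Proof.
move: cpos; clear csum cpos.
elim: s => [|a s' IH] cp g0 hs i; first by rewrite in_nil.
rewrite big_cons in hs.
have cp' : forall j, j \in s' -> 0 < c j by move=> j js; apply: cp; rewrite inE js orbT.
have g0' : forall j, j \in s' -> 0 <= g j by move=> j js; apply: g0; rewrite inE js orbT.
have ha : 0 < c a by apply: cp; rewrite inE eqxx.
have ga : 0 <= g a by apply: g0; rewrite inE eqxx.
have hs' : 0 <= \sum_(j <- s') c j * g j.
  rewrite big_seq; apply: sumr_ge0 => j sj.
  by rewrite mulr_ge0 // ?g0' // ltW // cp'.
rewrite inE => /orP[/eqP->|ins'].
  have : c a * g a <= 0 by apply: le_trans hs; rewrite lerDl.
  by rewrite pmulr_rle0.
have hca : 0 <= c a * g a by rewrite mulr_ge0 // ltW.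
by apply: (IH cp' g0') => //; move: hs hca; set X := c a * g a; lra.
Qed.

Lemma wsum_const (q : V) : \sum_(i <- s) c i *: q = q.
Proof. by rewrite -scaler_suml csum scale1r. Qed.

Lemma wsum_constR (q : R) : \sum_(i <- s) c i * q = q.
Proof. by rewrite -mulr_suml csum mul1r. Qed.

Lemma wsum_sub (f : I -> V) (p : V) :
  \sum_(i <- s) c i *: f i - p = \sum_(i <- s) c i *: (f i - p).
Proof.
rewrite -{1}(wsum_const p) -sumrB; apply: eq_bigr => i _.
by rewrite scalerBr.
Qed.

Lemma wsum_ne (f g : I -> V) (d : R) :
  (forall i, i \in s -> `|f i - g i| <= d) ->
  `|\sum_(i <- s) c i *: f i - \sum_(i <- s) c i *: g i| <= d.
Proof.
move=> fg; rewrite -sumrB.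
apply: le_trans (ler_norm_sum _ _ _) _.
rewrite -(wsum_constR d) big_seq [X in _ <= X]big_seq.
apply: ler_sum => i si; have ci := ltW (cpos i si).
by rewrite -scalerBr normrZ ger0_norm // ler_wpM2l // fg.
Qed.

Lemma wsum_jensen (f : I -> V) :
  `|\sum_(i <- s) c i *: f i| ^+ 2 <= \sum_(i <- s) c i * `|f i| ^+ 2.
Proof.
set y := \sum_(i <- s) c i *: f i.
have e : `|y| ^+ 2 = \sum_(i <- s) c i * ip (f i) y.
  rewrite -(ipxx hip) {1}/y (ip_suml hip); apply: eq_bigr => i _.
  by rewrite (ipZl hip).
have le1 : `|y| ^+ 2 <= \sum_(i <- s) c i * ((`|f i| ^+ 2 + `|y| ^+ 2) / 2).
  rewrite {1}e big_seq [X in _ <= X]big_seq; apply: ler_sum => i si.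
  have ci := ltW (cpos i si); rewrite ler_wpM2l //.
  have := cs hip (f i) y.
  have : 0 <= (`|f i| - `|y|) ^+ 2 by apply: sqr_ge0.
  nra.
have e2 : \sum_(i <- s) c i * ((`|f i| ^+ 2 + `|y| ^+ 2) / 2) =
    (\sum_(i <- s) c i * `|f i| ^+ 2) / 2 + `|y| ^+ 2 / 2.
  rewrite -(wsum_constR (`|y| ^+ 2 / 2)) mulr_suml -big_split /=.
  by apply: eq_bigr => i _; ring.
lra.
Qed.

Lemma wsum_quasi (f : I -> V) (p : V) (B : R) :
  (forall i, i \in s -> `|f i - p| ^+ 2 <= B) ->
  `|\sum_(i <- s) c i *: f i - p| ^+ 2 <= B /\
  (B <= `|\sum_(i <- s) c i *: f i - p| ^+ 2 ->
     forall i, i \in s -> B <= `|f i - p| ^+ 2).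
Proof.
move=> hB.
have J := wsum_jensen (fun i => f i - p); rewrite -wsum_sub in J.
have le2 : \sum_(i <- s) c i * `|f i - p| ^+ 2 <= B.
  rewrite -(wsum_constR B) big_seq [X in _ <= X]big_seq; apply: ler_sum => i si.
  by have ci := ltW (cpos i si); rewrite ler_wpM2l // hB.
split; first lra.
move=> hge i si.
have := @wsum_le0 (fun j => B - `|f j - p| ^+ 2).
move=> /(_ _ _ i si); rewrite subr_le0; apply.
  by move=> j sj; rewrite subr_ge0 hB.
have -> : \sum_(j <- s) c j * (B - `|f j - p| ^+ 2) =
   B - \sum_(j <- s) c j * `|f j - p| ^+ 2.
  have eB := esym (wsum_constR B).
  rewrite [in RHS]eB -sumrB; apply: eq_bigr => j _; ring.
lra.
Qed.

Lemma sum_pos (s' : seq I) : s' != [::] -> (forall i, i \in s' -> 0 < c i) ->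
  0 < \sum_(i <- s') c i.
Proof.
case: s' => [//|b s''] _ cp'.
rewrite big_cons; apply: ltr_pwDl; first by apply: cp'; rewrite inE eqxx.
rewrite big_seq; apply: sumr_ge0 => j js; apply: ltW; apply: cp'.
by rewrite inE js orbT.
Qed.

Lemma wsum_D (D : set V) (f : I -> V) : convex_subset D -> s != [::] ->
  (forall i, i \in s -> D (f i)) -> D (\sum_(i <- s) c i *: f i).
Proof.
move=> cD; move: cpos csum; clear cpos csum.
suff H : forall s', s' != [::] -> (forall i, i \in s' -> 0 < c i) ->
   (forall i, i \in s' -> D (f i)) ->
   D ((\sum_(i <- s') c i)^-1 *: \sum_(i <- s') c i *: f i).
  by move=> cp cs1 sn fD; have := H s sn cp fD; rewrite cs1 invr1 scale1r.
elim=> [//|a s' IH] _ cp fD.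
have ha : 0 < c a by apply: cp; rewrite inE eqxx.
have Da : D (f a) by apply: fD; rewrite inE eqxx.
have cp' : forall j, j \in s' -> 0 < c j by move=> j js; apply: cp; rewrite inE js orbT.
have fD' : forall j, j \in s' -> D (f j) by move=> j js; apply: fD; rewrite inE js orbT.
case: (eqVneq s' [::]) => [->|sn].
  by rewrite !big_cons !big_nil !addr0 scalerA mulVf ?gt_eqF // scale1r.
have IH' := IH sn cp' fD'.
set S := \sum_(i <- s') c i in IH'.
set Y := \sum_(i <- s') c i *: f i in IH'.
have Spos : 0 < S by apply: sum_pos.
rewrite !big_cons -/S -/Y.
have := cD (f a) (S^-1 *: Y) (c a / (c a + S)) Da IH'.
have -> : 1 - c a / (c a + S) = S / (c a + S).
  by field; rewrite gt_eqF // addr_gt0.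
rewrite scalerA.
have -> : S / (c a + S) * S^-1 = (c a + S)^-1.
  by field; rewrite !gt_eqF // addr_gt0.
rewrite scalerDr scalerA [(_ ^-1) * c a]mulrC.
have hS : 0 < c a + S by rewrite addr_gt0.
move=> h; apply: h.
apply/andP; split; first by rewrite divr_ge0 // ltW.
by rewrite ler_pdivrMr // mul1r lerDl ltW.
Qed.

End Weighted.
Section Ops.
Context {R : realType} {V : normedModType R} {ip : V -> V -> R}.
Hypothesis hip : is_inner_product ip.
Variables (D : set V) (m : nat) (T : 'I_m -> V -> V).
Hypothesis TD : forall i, maps_into D (T i).
Hypothesis Tfne : forall i, firmly_nonexpansive ip D (T i).

Lemma fne_ne i x y : D x -> D y -> `|T i x - T i y| <= `|x - y|.
Proof.
move=> Dx Dy; have h := Tfne i x y Dx Dy.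
have := cs hip (x - y) (T i x - T i y).
have := normr_ge0 (x - y); have := normr_ge0 (T i x - T i y).
move: h; set a := `|T i x - T i y|; set b := `|x - y|; set c := ip _ _.
nra.
Qed.

Lemma fne_quasi i x p : D x -> D p -> T i p = p ->
  `|T i x - p| ^+ 2 + `|T i x - x| ^+ 2 <= `|x - p| ^+ 2.
Proof.
move=> Dx Dp Tp; have h := Tfne i x p Dx Dp; rewrite Tp in h.
have e : x - p = (x - T i x) + (T i x - p) by rewrite addrA subrK.
rewrite e in h *; rewrite (normD2 hip (x - T i x) (T i x - p)).
rewrite (ipDl hip) (ipxx hip) in h.
rewrite [`|T i x - x|]distrC.
move: h; set a := ip _ _; lra.
Qed.

Lemma string_cons i t x : string_op T (i :: t) x = string_op T t (T i x).
Proof. by []. Qed.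

Lemma string_D t x : D x -> D (string_op T t x).
Proof.
elim: t x => [//|i t IH] x Dx; rewrite string_cons; apply: IH; exact: TD.
Qed.

Lemma string_ne t x y : D x -> D y ->
  `|string_op T t x - string_op T t y| <= `|x - y|.
Proof.
elim: t x y => [|i t IH] x y Dx Dy; first by [].
rewrite !string_cons; apply: le_trans (IH _ _ (TD i x Dx) (TD i y Dy)) _.
exact: fne_ne.
Qed.

Lemma string_fix t q : (forall i, T i q = q) -> string_op T t q = q.
Proof. by move=> hq; elim: t => [//|i t IH]; rewrite string_cons hq. Qed.

Lemma string_quasi t x p : D x -> D p -> (forall i, T i p = p) ->
  `|string_op T t x - p| ^+ 2 <= `|x - p| ^+ 2 /\
  (`|x - p| ^+ 2 <= `|string_op T t x - p| ^+ 2 -> forall i, i \in t -> T i x = x).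
Proof.
move=> + Dp Tp; elim: t x => [|i t IH] x Dx.
  by split => // _ i; rewrite in_nil.
rewrite string_cons.
have Dy := TD i x Dx.
have [h1 h2] := IH _ Dy.
have hq := fne_quasi i x p Dx Dp (Tp i).
have hn := sqr_ge0 `|T i x - x|.
split; first lra.
move=> hge.
have h0 : `|T i x - x| ^+ 2 <= 0 by lra.
have yx : T i x = x.
  apply/eqP; rewrite -subr_eq0 -normr_eq0 -sqrf_eq0; apply/eqP.
  by apply: le_anti; rewrite h0 sqr_ge0.
move=> j; rewrite inE => /orP[/eqP->//|jt].
by rewrite yx in h2 hge; apply: h2.
Qed.

Section TS.
Variables (Om : seq (seq 'I_m)) (ww : seq 'I_m -> R).
Hypothesis hM : in_M Om ww.

Let wpos t : t \in Om -> 0 < ww t.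
Proof. by case: hM => _ _ _ h _ /h /andP[]. Qed.
Let wsum : \sum_(t <- Om) ww t = 1.
Proof. by case: hM. Qed.
Let Omn : Om != [::].
Proof. by apply/eqP => e; move: wsum; rewrite e big_nil => /eqP; rewrite eq_sym oner_eq0. Qed.

Lemma TS_D x : convex_subset D -> D x -> D (T_S T Om ww x).
Proof.
move=> cD Dx; apply: (wsum_D wpos wsum _ _ cD Omn) => t _; exact: string_D.
Qed.

Lemma TS_ne x y : D x -> D y -> `|T_S T Om ww x - T_S T Om ww y| <= `|x - y|.
Proof.
move=> Dx Dy; apply: (wsum_ne wpos wsum) => t _; exact: string_ne.
Qed.

Lemma TS_fix q : (forall i, T i q = q) -> T_S T Om ww q = q.
Proof.
move=> hq; rewrite /T_S -{2}(wsum_const wsum q); apply: eq_bigr => t _.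
by rewrite string_fix.
Qed.

Lemma TS_quasi x p : D x -> D p -> (forall i, T i p = p) ->
  `|T_S T Om ww x - p| ^+ 2 <= `|x - p| ^+ 2 /\
  (`|x - p| ^+ 2 <= `|T_S T Om ww x - p| ^+ 2 ->
     forall t, t \in Om -> forall i, i \in t -> T i x = x).
Proof.
move=> Dx Dp Tp.
have [h1 h2] := wsum_quasi hip wpos wsum (fun t => string_op T t x) p
   (`|x - p| ^+ 2) (fun t _ => (string_quasi t x p Dx Dp Tp).1).
split => // hge t tO.
exact: (string_quasi t x p Dx Dp Tp).2 (h2 hge t tO).
Qed.

End TS.
End Ops.
Section Eps.
Context {R : realType}.

Lemma eventuallyP (P : nat -> Prop) :
  (\forall n \near \oo, P n) <-> exists N, forall n, (N <= n)%N -> P n.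
Proof.
split; first by case=> N _ HN; exists N => n hn; apply: HN.
by case=> N HN; exists N => // n /= hn; apply: HN.
Qed.

Lemma cvg_epsP {V : normedModType R} (g : nat -> V) p :
  g @ \oo --> p <->
  forall e, 0 < e -> exists N, forall n, (N <= n)%N -> `|g n - p| < e.
Proof.
rewrite cvgrPdistC_lt; split => h e e0; apply/eventuallyP; exact: h.
Qed.

Lemma cauchy_eps_cvg {V : completeNormedModType R} (g : nat -> V) :
  (forall e, 0 < e -> exists N, forall n, (N <= n)%N -> `|g N - g n| < e) ->
  exists p : V, g @ \oo --> p.
Proof.
move=> hc.
have : cvgn g.
  apply/cauchy_cvgP/cauchy_exP => e e0.
  have [N HN] := hc e e0.
  exists (g N); apply/eventuallyP; exists N => n hn.
  by rewrite -ball_normE /ball /=; apply: HN.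
by move=> h; exists (limn g).
Qed.

Lemma le0_eps (c : R) : (forall e, 0 < e -> c <= e) -> c <= 0.
Proof.
move=> h; rewrite leNgt; apply/negP => c0.
have := h (c / 2); rewrite divr_gt0 // => /(_ isT); lra.
Qed.

End Eps.
Section Xu.
Context {R : realType}.

Lemma sum_nat_ge0 (d : nat -> R) m n : (forall k, 0 <= d k) -> 0 <= \sum_(m <= k < n) d k.
Proof. by move=> d0; apply: sumr_ge0 => k _. Qed.

Lemma xu (a g d b : nat -> R) :
 (forall k, 0 <= a k) -> (forall k, 0 <= g k <= 1) -> (forall k, 0 <= d k) ->
 (forall M, exists N, forall n, (N <= n)%N -> M <= \sum_(0 <= k < n) g k) ->
 (forall e, 0 < e -> exists N, forall m n, (N <= m)%N -> (m <= n)%N ->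
    \sum_(m <= k < n) d k <= e) ->
 (forall e, 0 < e -> exists N, forall k, (N <= k)%N -> b k <= e) ->
 (forall k, a k.+1 <= (1 - g k) * a k + g k * b k + d k) ->
 forall e, 0 < e -> exists N, forall n, (N <= n)%N -> a n <= e.
Proof.
move=> a0 g01 d0 gdiv dtail bsmall rec e e0.
pose e' := e / 3.
have e'0 : 0 < e' by rewrite divr_gt0.
have [N1 HN1] := bsmall e' e'0.
have [N2 HN2] := dtail e' e'0.
pose K := maxn N1 N2.
have KN1 : (N1 <= K)%N by rewrite leq_maxl.
have KN2 : (N2 <= K)%N by rewrite leq_maxr.
have rec' : forall k, (K <= k)%N -> a k.+1 <= (1 - g k) * a k + g k * e' + d k.
  move=> k hk; apply: le_trans (rec k) _.
  have [g0 g1] := andP (g01 k).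
  have : g k * b k <= g k * e' by rewrite ler_wpM2l // HN1 // (leq_trans KN1).
  lra.
have [n0 [Kn0 an0]] : exists n0, (K <= n0)%N /\ a n0 <= 2 * e'.
  case: (pselect (exists n0, (K <= n0)%N /\ a n0 <= 2 * e')) => // H.
  exfalso.
  have Hn : forall n, (K <= n)%N -> 2 * e' < a n.
    move=> n hn; rewrite ltNge; apply/negP => hle; apply: H; by exists n.
  have sumb : forall j, a (K + j)%N <=
      a K - e' * \sum_(K <= k < K + j) g k + \sum_(K <= k < K + j) d k.
    elim=> [|j IH].
      by rewrite addn0 !big_geq // mulr0 subr0 addr0.
    rewrite addnS !big_nat_recr ?leq_addr //=.
    have h1 := rec' (K + j)%N (leq_addr _ _).
    have h2 := Hn (K + j)%N (leq_addr _ _).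
    have [g0 g1] := andP (g01 (K + j)%N).
    have : g (K + j)%N * e' <= g (K + j)%N * (a (K + j)%N - e').
      by rewrite ler_wpM2l //; lra.
    move: h1 h2 IH; set A := a _; set G := g _; set S1 := \sum_(_ <= _ < _) g _;
      set S2 := \sum_(_ <= _ < _) d _.
    rewrite mulrDr. nra.
  set M := \sum_(0 <= k < K) g k + (a K + e') / e' + 1.
  have [N3 HN3] := gdiv M.
  pose n := maxn N3 K.
  have Kn : (K <= n)%N by rewrite leq_maxr.
  have N3n : (N3 <= n)%N by rewrite leq_maxl.
  have := sumb (n - K)%N; rewrite subnKC //.
  have hd := HN2 K n KN2 Kn.
  have hg := HN3 n N3n.
  rewrite (big_cat_nat (n := K)) //= in hg.
  have hM : e' * M = e' * \sum_(0 <= k < K) g k + (a K + e') + e'.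
    rewrite /M; field; exact: lt0r_neq0.
  have := a0 n.
  have : e' * M <= e' * (\sum_(0 <= k < K) g k + \sum_(K <= k < n) g k).
    by rewrite ler_wpM2l // ltW.
  rewrite hM mulrDr.
  lra.
exists n0 => n hn.
have key : forall j, a (n0 + j)%N <= 2 * e' + \sum_(n0 <= k < n0 + j) d k.
  elim=> [|j IH]; first by rewrite addn0 big_geq // addr0.
  rewrite addnS big_nat_recr ?leq_addr //=.
  have h1 := rec' (n0 + j)%N (leq_trans Kn0 (leq_addr _ _)).
  have [g0 g1] := andP (g01 (n0 + j)%N).
  have S0 := sum_nat_ge0 d n0 (n0 + j)%N d0.
  move: h1 IH S0 g0 g1; set A := a (n0 + j)%N; set G := g _; set S := \sum_(_ <= _ < _) d _.
  move=> h1 IH S0 g0 g1.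
  have : (1 - G) * A <= (1 - G) * (2 * e' + S) by rewrite ler_wpM2l //; lra.
  have : 0 <= G * (e' + S) by rewrite mulr_ge0 //; lra.
  nra.
have := key (n - n0)%N; rewrite subnKC //.
have := HN2 n0 n (leq_trans KN2 Kn0) hn.
rewrite /e'; lra.
Qed.

End Xu.
Section Misc.
Context {R : realType} {V : normedModType R}.

Lemma I0 (c : R) (x y : V) : c *: x + (1 - c) *: y = y + c *: (x - y).
Proof. by rewrite scalerBl scale1r scalerBr addrCA. Qed.

Lemma Isub (x y q : V) : (x - q) - (y - q) = x - y.
Proof. by rewrite opprB addrA subrK. Qed.

Lemma I1 (c : R) (x y q : V) :
  c *: x + (1 - c) *: y - q = c *: (x - q) + (1 - c) *: (y - q).
Proof. by rewrite !I0 Isub addrAC. Qed.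

Lemma Itel (x y z : V) : (x - y) + (y - z) = x - z.
Proof. by rewrite addrA subrK. Qed.

Lemma addKr' (x y : V) : (x + y) - x = y.
Proof. by rewrite addrC addKr. Qed.

Lemma div_pos_inf (lam : nat -> R) :
  (\sum_(0 <= k < n) lam k) @[n --> \oo] --> +oo ->
  forall M, exists N, forall n, (N <= n)%N -> M <= \sum_(0 <= k < n) lam k.
Proof.
move=> /cvgryPge h M; exact/eventuallyP/h.
Qed.

Lemma tail_small (h : nat -> R) :
  cvg ((\sum_(0 <= k < n) h k) @[n --> \oo]) ->
  forall e, 0 < e -> exists N, forall m n, (N <= m)%N -> (m <= n)%N ->
    \sum_(m <= k < n) h k <= e.
Proof.
move=> /cvg_ex [L hL] e e0.
have e20 : 0 < e / 2 by rewrite divr_gt0.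
have [N HN] := (cvg_epsP _ _).1 hL (e / 2) e20.
exists N => m n Nm mn.
have h1 := HN n (leq_trans Nm mn); have h2 := HN m Nm.
rewrite (big_cat_nat (n := m) (m := 0%N)) //= in h1.
move: h1 h2; set A := \sum_(0 <= k < m) h k; set B := \sum_(m <= k < n) h k.
move=> h1 h2.
have := ler_normD (A + B - L) (L - A).
rewrite -normrN opprB in h2.
have -> : A + B - L + (L - A) = B by rewrite addrA subrK addrC addKr.
move=> h3.
have := ler_norm B; lra.
Qed.

End Misc.
Lemma banach (R : realType) (V : completeNormedModType R) (D : set V) (G : V -> V) (q : R) :
  closed D -> D !=set0 -> (forall x, D x -> D (G x)) -> 0 <= q < 1 ->
  (forall x y, D x -> D y -> `|G x - G y| <= q * `|x - y|) -> exists2 p, D p & p = G p.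
Proof.
move=> cD D0 GD /andP[q0 q1] Gq.
have [g gE] := Pfun GD.
rewrite gE; apply: banach_fixed_point => //.
exists (NngNum q0); split => //.
by case=> x y [/= Dx Dy] /=; rewrite -gE; exact: Gq.
Qed.

Lemma vecD_sub (R : realType) (V : normedModType R) (a b c : V) :
  (a + b) - (a + c) = b - c.
Proof. by rewrite opprD addrACA subrr add0r. Qed.

Section Halpern.
Context {R : realType} {V : completeNormedModType R} {ip : V -> V -> R}.
Hypothesis hip : is_inner_product ip.
Variables (D F : set V) (U : V -> V).
Hypothesis cD : closed D.
Hypothesis cvD : convex_subset D.
Hypothesis UD : forall x, D x -> D (U x).
Hypothesis Une : forall x y, D x -> D y -> `|U x - U y| <= `|x - y|.
Hypothesis FD : forall q, F q -> D q.
Hypothesis UF : forall q, F q -> U q = q.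
Hypothesis FU : forall x, D x -> U x = x -> F x.
Variable u : V.
Hypothesis Du : D u.

Lemma mono a b : D a -> D b -> 0 <= ip ((a - U a) - (b - U b)) (a - b).
Proof.
move=> Da Db.
have e : (a - U a) - (b - U b) = (a - b) - (U a - U b).
  by rewrite !opprB addrACA [RHS]addrACA; congr (_ + _); rewrite addrC.
rewrite e (ipBl hip) (ipxx hip).
have := cs hip (U a - U b) (a - b).
have := Une a b Da Db.
have := normr_ge0 (a - b); have := normr_ge0 (U a - U b).
set X := ip _ _; set A := `|a - b|; set B := `|U a - U b|; nra.
Qed.

Lemma browder_ex (t : R) : 0 < t < 1 ->
  exists z, D z /\ z = t *: u + (1 - t) *: U z.
Proof.
move=> /andP[t0 t1].
have := @banach R V D (fun z => t *: u + (1 - t) *: U z) (1 - t) cD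
  (ex_intro _ u Du).
case.
- move=> y Dy; have := cvD u (U y) t Du (UD y Dy); apply; rewrite !ltW //.
- apply/andP; split; lra.
- move=> y y' Dy Dy'; rewrite vecD_sub -scalerBr normrZ ger0_norm; last lra.
  by rewrite ler_wpM2l ?Une //; lra.
by move=> z Dz ez; exists z.
Qed.

Lemma browder_s z t : 0 < t < 1 -> z = t *: u + (1 - t) *: U z ->
  z - U z = (t / (1 - t)) *: (u - z).
Proof.
move=> /andP[t0 t1] ez.
have e1 : z - U z = t *: (u - U z).
  rewrite {1}ez scalerBl scale1r scalerBr -addrA (addrAC (U z)) subrr add0r.
  by [].
have e2 : u - z = (1 - t) *: (u - U z).
  by rewrite {1}ez opprD addrA scalerBr [(1 - t) *: u]scalerBl scale1r.
rewrite e1 e2 scalerA; congr (_ *: _); field; lra.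
Qed.

Lemma browder_proj z t y : 0 < t < 1 -> D z -> z = t *: u + (1 - t) *: U z ->
  F y -> 0 <= ip (u - z) (z - y).
Proof.
move=> ht Dz ez Fy.
have := mono z y Dz (FD y Fy); rewrite (browder_s z t ht ez) (UF y Fy) subrr subr0 (ipZl hip).
case/andP: ht => t0 t1.
have s0 : 0 < t / (1 - t) by rewrite divr_gt0 //; lra.
by rewrite pmulr_rge0.
Qed.

Lemma proj_bound z y : 0 <= ip (u - z) (z - y) -> `|u - z| <= `|u - y|.
Proof.
move=> h.
have e : u - z = (u - y) - (z - y) by rewrite opprB addrA subrK.
have h2 : `|u - z| ^+ 2 = ip (u - z) (u - y) - ip (u - z) (z - y).
  by rewrite -(ipxx hip) -(ipBr hip) -e.
have := cs hip (u - z) (u - y).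
have := normr_ge0 (u - z); have := normr_ge0 (u - y).
move: h h2; set X := ip _ (z - y); set Y := ip _ (u - y); set A := `|u - z|;
  set B := `|u - y|; nra.
Qed.

Lemma browder_cmp a b s r : D a -> D b -> 0 < r -> r < s ->
  a - U a = s *: (u - a) -> b - U b = r *: (u - b) ->
  `|a - b| ^+ 2 <= `|u - b| ^+ 2 - `|u - a| ^+ 2.
Proof.
move=> Da Db r0 rs ea eb.
have eab : a - b = (u - b) - (u - a) by rewrite vecD_sub opprK addrC.
have := mono a b Da Db; rewrite ea eb eab.
move: (u - a) (u - b) => al be.
have L0 := sqr_ge0 `|be - al|.
rewrite (normB2 hip) in L0 *.
rewrite (ipBl hip) !(ipBr hip) !(ipZl hip) !(ipxx hip) (ipC hip al).
set X := ip _ _; set A := `|al| ^+ 2; set B := `|be| ^+ 2.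
move=> h.
have h1 : (s + r) * (B - 2 * X + A) <= (s - r) * (B - A) by nra.
have h2 : 0 <= B - A.
  have : 0 <= (s - r) * (B - A) by apply: le_trans h1; apply: mulr_ge0 => //; lra.
  by rewrite pmulr_rge0 //; lra.
have h3 : (s - r) * (B - A) <= (s + r) * (B - A) by rewrite ler_wpM2r //; lra.
have h4 : (s + r) * (B - 2 * X + A) <= (s + r) * (B - A) by lra.
by rewrite ler_pM2l in h4 => //; lra.
Qed.

Lemma browder_key z t y : 0 < t < 1 -> D z -> z = t *: u + (1 - t) *: U z ->
  D y -> t * ip (u - z) (y - z) <= `|U y - y| * `|z - y|.
Proof.
move=> /andP[t0 t1] Dz ez Dy.
have e1 : z - y = t *: (u - y) + (1 - t) *: (U z - y) by rewrite {1}ez I1.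
have e2 : u - y = (u - z) + (z - y) by rewrite Itel.
have h1 : `|z - y| ^+ 2 = t * ip (u - z) (z - y) + t * `|z - y| ^+ 2
     + (1 - t) * ip (U z - y) (z - y).
  rewrite -(ipxx hip) {1}e1 (ipDl hip) !(ipZl hip) e2 (ipDl hip) (ipxx hip).
  ring.
have h2 : ip (U z - y) (z - y) <= `|U z - y| * `|z - y| := cs hip _ _.
have h3 : `|U z - y| <= `|z - y| + `|U y - y|.
  rewrite -(Itel (U z) (U y) y); apply: le_trans (ler_normD _ _) _.
  by rewrite lerD2r Une.
have e3 : ip (u - z) (y - z) = - ip (u - z) (z - y).
  by rewrite -(ipNr hip) opprB.
rewrite e3.
have n0 := normr_ge0 (z - y); have n1 := normr_ge0 (U y - y).
have n2 := normr_ge0 (U z - y).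
have h4 : (1 - t) * ip (U z - y) (z - y) <=
    (1 - t) * ((`|z - y| + `|U y - y|) * `|z - y|).
  apply: ler_wpM2l; first lra.
  by apply: le_trans h2 _; rewrite ler_wpM2r.
move: h1 h4; set X := ip (u - z) _; set A := `|z - y|; set B := `|U y - y|.
set Y := ip _ _.
move=> h1 h4.
have : 0 <= t * (B * A) by rewrite mulr_ge0 // ?mulr_ge0 // ltW.
nra.
Qed.

Lemma ip_cont a a' b b' :
  ip a b <= ip a' b' + `|a - a'| * `|b| + `|a'| * `|b - b'|.
Proof.
have e : ip a b = ip (a - a') b + ip a' (b - b') + ip a' b'.
  rewrite (ipBl hip) (ipBr hip); ring.
rewrite e; have := cs hip (a - a') b; have := cs hip a' (b - b'); lra.
Qed.

Theorem halpern (lam : nat -> R) (x0 : V) (x : nat -> V) :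
  steering lam -> D x0 -> x 0%N = x0 ->
  (forall k, x k.+1 = lam k *: u + (1 - lam k) *: U (x k)) -> F !=set0 ->
  exists2 p, is_metric_proj F u p & x @ \oo --> p.
Proof.
move=> [lam01 lam0 lamdiv lamtv] Dx0 ex0 ex [q Fq].
have Dq := FD q Fq; have Uq := UF q Fq.
pose t n : R := (n.+2%:R)^-1.
have t01 n : 0 < t n < 1.
  rewrite /t invr_gt0 ltr0n /= invf_lt1 ?ltr0n // ltr1n //.
have [z hz] := choice (fun n => browder_ex (t n) (t01 n)).
have zD n : D (z n) := (hz n).1.
have ez n : z n = t n *: u + (1 - t n) *: U (z n) := (hz n).2.
pose s n : R := t n / (1 - t n).
have es n : s n = (n.+1%:R)^-1.
  rewrite /s /t.
  have h1 : (n.+2%:R : R) != 0 by rewrite pnatr_eq0.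
  have h2 : (n.+1%:R : R) != 0 by rewrite pnatr_eq0.
  have e2 : (n.+2%:R : R) = n.+1%:R + 1 by rewrite -natr1.
  rewrite e2 in h1 *; field.
  have hn : 0 <= (n%:R : R) := ler0n _ _.
  by apply/andP; split; rewrite gt_eqF //; lra.
have sdec n m : (n < m)%N -> s m < s n.
  by move=> nm; rewrite !es ltf_pV2 ?posrE ?ltr0n // ltr_nat ltnS.
have s0 n : 0 < s n by rewrite es invr_gt0 ltr0n.
have zs n : z n - U (z n) = s n *: (u - z n) := browder_s (z n) (t n) (t01 n) (ez n).
have zproj n y : F y -> 0 <= ip (u - z n) (z n - y) :=
  browder_proj (z n) (t n) y (t01 n) (zD n) (ez n).
have zb n : `|u - z n| <= `|u - q| := proj_bound (z n) q (zproj n q Fq).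
have zc n m : (n <= m)%N -> `|z n - z m| ^+ 2 <= `|u - z m| ^+ 2 - `|u - z n| ^+ 2.
  rewrite leq_eqVlt => /orP[/eqP->|nm].
    by rewrite subrr normr0 expr0n /= subrr.
  exact: (browder_cmp (z n) (z m) (s n) (s m) (zD n) (zD m) (s0 m) (sdec _ _ nm) (zs n) (zs m)).
pose f n := `|u - z n| ^+ 2.
have fnd : nondecreasing_seq f.
  move=> n m nm; have := zc n m nm; have := sqr_ge0 `|z n - z m|; rewrite /f; lra.
have fub : has_ubound (range f).
  exists (`|u - q| ^+ 2) => _ [n _ <-]; rewrite /f.
  have := zb n; have := normr_ge0 (u - z n); nra.
have fcv := nondecreasing_cvgn fnd fub.
have [p zp] : exists p : V, z @ \oo --> p.
  apply: cauchy_eps_cvg => e e0.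
  have e20 : 0 < e ^+ 2 / 2 by rewrite divr_gt0 // exprn_gt0.
  have [N HN] := (cvg_epsP _ _).1 fcv _ e20.
  exists N => n Nn.
  have h1 := HN n Nn; have h2 := HN N (leqnn N).
  have h3 := zc N n Nn.
  have a1 := ler_norm (f n - sup (range f)).
  have a2 : sup (range f) - f N <= `|f N - sup (range f)| by rewrite distrC ler_norm.
  have : `|z N - z n| ^+ 2 < e ^+ 2 by move: h3; rewrite -/(f n) -/(f N); lra.
  have := normr_ge0 (z N - z n); nra.
have Dp : D p.
  apply: (closed_cvg D cD _ p zp); apply: nearW => n; exact: zD.
have zeps : forall e, 0 < e -> exists N, forall n, (N <= n)%N -> `|z n - p| < e.
  exact: (cvg_epsP _ _).1 zp.
have sbig : forall c, 0 <= c -> forall e, 0 < e ->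
    exists N, forall n, (N <= n)%N -> s n * c <= e.
  move=> c c0 e e0.
  have [N HN] := (eventuallyP _).1 (nbhs_infty_ger (c / e)).
  exists N => n Nn; have h := HN n Nn.
  have h' : c <= n%:R * e by rewrite -ler_pdivrMr.
  rewrite es ler_pdivrMl ?ltr0n //.
  apply: le_trans h' _; apply: ler_wpM2r; [exact: ltW | by rewrite ler_nat].
have Up : U p = p.
  apply/eqP; rewrite -subr_eq0 -normr_le0; apply: le0_eps => e e0.
  have e30 : 0 < e / 3 by rewrite divr_gt0.
  have [N1 HN1] := zeps _ e30.
  have [N2 HN2] := sbig _ (normr_ge0 (u - q)) _ e30.
  pose n := maxn N1 N2.
  have h1 := HN1 n (leq_maxl _ _); have h2 := HN2 n (leq_maxr _ _).
  have e1 : U p - p = (U p - U (z n)) + ((U (z n) - z n) + (z n - p)).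
    by rewrite !Itel.
  rewrite e1; apply: le_trans (ler_normD _ _) _.
  apply: le_trans (lerD (lexx _) (ler_normD _ _)) _.
  have h3 : `|U p - U (z n)| <= `|z n - p| by rewrite distrC Une.
  have h4 : `|U (z n) - z n| <= s n * `|u - q|.
    have sn := ltW (s0 n).
    by rewrite distrC zs normrZ ger0_norm // ler_wpM2l.
  lra.
have Fp : F p := FU p Dp Up.
have projp y : F y -> 0 <= ip (u - p) (p - y).
  move=> Fy; rewrite -oppr_le0; apply: le0_eps => e e0.
  pose C := `|u - q| + `|u - y| + `|u - p| + 1.
  have C0 : 0 < C by rewrite /C; have := normr_ge0 (u - q);
    have := normr_ge0 (u - y); have := normr_ge0 (u - p); lra.
  have [N HN] := zeps _ (divr_gt0 e0 C0).
  have h1 := HN N (leqnn N).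
  have h2 := ip_cont (u - z N) (u - p) (z N - y) (p - y).
  have h3 := zproj N y Fy.
  rewrite vecD_sub opprK [- z N + p]addrC Isub [`|p - z N|]distrC in h2.
  have h4 : `|z N - y| <= `|u - q| + `|u - y|.
    rewrite -(Itel (z N) u y); apply: le_trans (ler_normD _ _) _.
    by rewrite lerD2r distrC; exact: zb.
  have h5 : `|z N - p| * (`|z N - y| + `|u - p|) <= e.
    have h6 : `|z N - p| * C < e by rewrite -ltr_pdivlMr.
    apply: le_trans (ltW h6); apply: ler_wpM2l => //.
    rewrite /C; lra.
  move: h2 h5; set P := `|z N - p|; set Q := `|z N - y|; set W := `|u - p|.
  move=> h2 h5; nra.
have proj : is_metric_proj F u p.
  by split => // y Fy; apply: proj_bound (projp y Fy).
exists p => //.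
have xD : forall k, D (x k).
  elim=> [|k IH]; first by rewrite ex0.
  rewrite ex; exact: (cvD u (U (x k)) (lam k) Du (UD _ IH) (lam01 k)).
pose R0 := Num.max `|u - q| `|x0 - q|.
have hR1 : `|u - q| <= R0 by rewrite /R0 le_max lexx.
have xb k : `|x k - q| <= R0.
  elim: k => [|k IH]; first by rewrite ex0 /R0 le_max lexx orbT.
  rewrite ex I1.
  apply: le_trans (ler_normD _ _) _.
  have [l0 l1] := andP (lam01 k).
  rewrite !normrZ !ger0_norm //; last lra.
  have h1 : `|U (x k) - q| <= R0.
    by rewrite -{1}Uq; apply: le_trans (Une _ _ (xD k) Dq) IH.
  have : lam k * `|u - q| <= lam k * R0 by rewrite ler_wpM2l.
  have : (1 - lam k) * `|U (x k) - q| <= (1 - lam k) * R0.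
    by rewrite ler_wpM2l //; lra.
  lra.
pose M := `|u - q| + R0.
have M0 : 0 <= M by rewrite /M; have := normr_ge0 (u - q); lra.
have Uxb k : `|U (x k) - q| <= R0.
  by rewrite -{1}Uq; apply: le_trans (Une _ _ (xD k) Dq) (xb k).
have Mb k : `|u - U (x k)| <= M.
  rewrite -(Itel u q (U (x k))); apply: le_trans (ler_normD _ _) _.
  by rewrite lerD2l distrC.
have stepb k : `|x k.+2 - x k.+1| <=
    (1 - lam k.+1) * `|x k.+1 - x k| + M * `|lam k.+1 - lam k|.
  have e2 := ex k.+1; have e1 := ex k.
  have ed : x k.+2 - x k.+1 = (1 - lam k.+1) *: (U (x k.+1) - U (x k))
      + (lam k.+1 - lam k) *: (u - U (x k)).
    rewrite e2 -(Itel _ (lam k.+1 *: u + (1 - lam k.+1) *: U (x k)) _).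
    rewrite vecD_sub -scalerBr; congr (_ + _).
    by rewrite e1 !I0 vecD_sub scalerBl.
  rewrite ed; apply: le_trans (ler_normD _ _) _.
  have [l0 l1] := andP (lam01 k.+1).
  rewrite !normrZ [`|1 - _|]ger0_norm; last lra.
  have a1 : (1 - lam k.+1) * `|U (x k.+1) - U (x k)| <=
      (1 - lam k.+1) * `|x k.+1 - x k|.
    by apply: ler_wpM2l; [lra | exact: Une].
  have a2 : `|lam k.+1 - lam k| * `|u - U (x k)| <= M * `|lam k.+1 - lam k|.
    by rewrite [M * _]mulrC; apply: ler_wpM2l.
  exact: lerD a1 a2.
have dstep : forall e, 0 < e -> exists N, forall n, (N <= n)%N ->
    `|x n.+1 - x n| <= e.
  apply: (@xu R (fun k => `|x k.+1 - x k|) (fun k => lam k.+1)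
      (fun k => M * `|lam k.+1 - lam k|) (fun _ => 0)).
  - by move=> k; exact: normr_ge0.
  - by move=> k; exact: lam01.
  - by move=> k; apply: mulr_ge0.
  - move=> M'; have [N HN] := div_pos_inf lam lamdiv (M' + 1).
    exists N => n Nn; have := HN n.+1 (leqW Nn).
    rewrite big_nat_recl //=.
    have [_ l1] := andP (lam01 0%N); lra.
  - move=> e e0.
    have eM : 0 < e / (M + 1) by rewrite divr_gt0 //; lra.
    have [N HN] := tail_small _ lamtv _ eM.
    exists N => m n Nm mn; rewrite -mulr_sumr.
    have h := HN m n Nm mn.
    have S0 : 0 <= \sum_(m <= k < n) `|lam k.+1 - lam k| by apply: sumr_ge0.
    have : (M + 1) * \sum_(m <= k < n) `|lam k.+1 - lam k| <= e.
      by rewrite -ler_pdivlMl //; lra.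
    move: S0; set S := \sum_(_ <= _ < _) _; nra.
  - by move=> e e0; exists 0%N => k _; exact: ltW.
  - by move=> k; rewrite mulr0 addr0; exact: stepb.
have afix : forall e, 0 < e -> exists N, forall n, (N <= n)%N ->
    `|U (x n) - x n| <= e.
  move=> e e0.
  have e20 : 0 < e / 2 by rewrite divr_gt0.
  have [N1 HN1] := dstep _ e20.
  have eM : 0 < e / (2 * (M + 1)) by rewrite divr_gt0 //; lra.
  have [N2 HN2] := (cvg_epsP _ _).1 lam0 _ eM.
  exists (maxn N1 N2) => n hn.
  have h1 := HN1 n (leq_trans (leq_maxl _ _) hn).
  have h2 := HN2 n (leq_trans (leq_maxr _ _) hn).
  rewrite subr0 in h2.
  have [l0 l1] := andP (lam01 n).
  rewrite ger0_norm // in h2.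
  rewrite -(Itel _ (x n.+1) _); apply: le_trans (ler_normD _ _) _.
  have e1 : x n.+1 - U (x n) = lam n *: (u - U (x n)) by rewrite ex I0 addKr'.
  rewrite distrC e1 normrZ ger0_norm //.
  have h3 : lam n * (2 * (M + 1)) < e by rewrite -ltr_pdivlMr //; lra.
  have := Mb n; have := normr_ge0 (u - U (x n)).
  move: h1 h3; set A := `|x n.+1 - x n|; set B := `|u - U (x n)|; set L := lam n.
  nra.
pose M2 := R0 + 2 * `|u - q|.
have xzb k n : `|z n - x k| <= M2.
  have a1 := ler_normD (z n - u) (u - x k); rewrite Itel [`|z n - u|]distrC in a1.
  have a2 := ler_normD (u - q) (q - x k); rewrite Itel [`|q - x k|]distrC in a2.
  have a3 := zb n; have a4 := xb k.
  rewrite /M2; lra.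
have lsup : forall e, 0 < e -> exists N, forall k, (N <= k)%N ->
    ip (u - p) (x k - p) <= e.
  move=> e e0.
  pose C := R0 + `|p - q| + `|u - q| + 1.
  have C0 : 0 < C by rewrite /C; have := normr_ge0 (p - q);
    have := normr_ge0 (u - q); lra.
  have C2 : 0 < 2 * C by rewrite mulr_gt0.
  have [n Hn] := zeps _ (divr_gt0 e0 C2).
  have hzn := Hn n (leqnn n).
  have [tn0 tn1] := andP (t01 n).
  have eta0 : 0 < e * t n / (2 * (M2 + 1)).
    have R00 : 0 <= R0 := le_trans (normr_ge0 _) hR1.
    have M2p : 0 < 2 * (M2 + 1) by rewrite /M2; have := normr_ge0 (u - q); lra.
    by rewrite divr_gt0 // mulr_gt0.
  have [K HK] := afix _ eta0.
  exists K => k Kk.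
  have hk := HK k Kk.
  have key := browder_key (z n) (t n) (x k) (t01 n) (zD n) (ez n) (xD k).
  have h2 := ip_cont (u - p) (u - z n) (x k - p) (x k - z n).
  rewrite !vecD_sub !opprK [- p + z n]addrC in h2.
  have M2p : 0 < M2 + 1.
    have R00 : 0 <= R0 := le_trans (normr_ge0 _) hR1.
    by rewrite /M2; have := normr_ge0 (u - q); lra.
  have hA : t n * ip (u - z n) (x k - z n) <= t n * (e / 2).
    apply: le_trans key _.
    have hb : `|U (x k) - x k| * `|z n - x k| <= e * t n / (2 * (M2 + 1)) * (M2 + 1).
      apply: ler_pM => //; have := xzb k n; lra.
    have eqe : e * t n / (2 * (M2 + 1)) * (M2 + 1) = t n * (e / 2).
      by field; exact: lt0r_neq0.
    by rewrite -eqe.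
  rewrite ler_pM2l // in hA.
  have hxp : `|x k - p| <= R0 + `|p - q|.
    have := ler_normD (x k - q) (q - p); rewrite Itel [`|q - p|]distrC.
    have := xb k; lra.
  have hzn' : `|z n - p| * (2 * C) < e by rewrite -ltr_pdivlMr.
  have hB : `|z n - p| * `|x k - p| + `|u - z n| * `|z n - p| <= e / 2.
    have : `|z n - p| * (`|x k - p| + `|u - z n|) <= `|z n - p| * C.
      apply: ler_wpM2l => //; have := zb n; rewrite /C; lra.
    move: hzn'; set P := `|z n - p|; set X := `|x k - p|; set W := `|u - z n|.
    move=> hzn' h; nra.
  lra.
have hfin : forall e, 0 < e -> exists N, forall n, (N <= n)%N -> `|x n - p| ^+ 2 <= e.
  apply: (@xu R (fun k => `|x k - p| ^+ 2) lam (fun _ => 0)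
    (fun k => 2 * ip (u - p) (x k.+1 - p))
    (fun k => sqr_ge0 _) lam01 (fun _ => lexx 0) (div_pos_inf lam lamdiv)).
- move=> e e0; exists 0%N => m n _ _; rewrite big1 //; exact: ltW.
- move=> e e0.
  have e20 : 0 < e / 2 by rewrite divr_gt0.
  have [K HK] := lsup _ e20.
  exists K => k Kk; have := HK k.+1 (leqW Kk); lra.
- move=> k; rewrite addr0.
  have [l0 l1] := andP (lam01 k).
  have eX : x k.+1 - p = lam k *: (u - p) + (1 - lam k) *: (U (x k) - p).
    by rewrite ex I1.
  have h1 := normD2 hip (lam k *: (u - p)) ((1 - lam k) *: (U (x k) - p)).
  have h2 : ip (lam k *: (u - p)) (x k.+1 - p) = `|lam k *: (u - p)| ^+ 2
      + ip (lam k *: (u - p)) ((1 - lam k) *: (U (x k) - p)).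
    by rewrite eX (ipDr hip) (ipxx hip).
  rewrite (ipZl hip) in h2.
  have h3 : `|(1 - lam k) *: (U (x k) - p)| ^+ 2 <= (1 - lam k) * `|x k - p| ^+ 2.
    rewrite normrZ ger0_norm; last lra.
    have hU : `|U (x k) - p| <= `|x k - p| by rewrite -{1}Up; apply: Une.
    have := normr_ge0 (U (x k) - p).
    move: hU; set A := `|U (x k) - p|; set B := `|x k - p|; move=> hU hA.
    have : A ^+ 2 <= B ^+ 2 by rewrite lerXn2r // ?nnegrE //; apply: le_trans hU.
    have : 0 <= A ^+ 2 := sqr_ge0 A.
    rewrite exprMn; set L := 1 - lam k; move=> h4 h5.
    have : L ^+ 2 * A ^+ 2 <= L * A ^+ 2.
      by rewrite expr2 -mulrA ler_piMl // ?mulr_ge0 //; rewrite /L; lra.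
    have : L * A ^+ 2 <= L * B ^+ 2 by rewrite ler_wpM2l // /L; lra.
    lra.
  have h0 : `|x k.+1 - p| ^+ 2 = `|lam k *: (u - p) + (1 - lam k) *: (U (x k) - p)| ^+ 2.
    by rewrite eX.
  have hY := sqr_ge0 `|lam k *: (u - p)|.
  move: h0 h1 h2 h3 hY.
  set Y := `|lam k *: (u - p)| ^+ 2; set I := ip (lam k *: (u - p)) _.
  set J := ip (u - p) (x k.+1 - p).
  move=> h0 h1 h2 h3 hY; lra.
apply/cvg_epsP => e e0.
have e2 : 0 < e ^+ 2 / 2 by rewrite divr_gt0 // exprn_gt0.
have [N HN] := hfin _ e2.
exists N => n Nn; have := HN n Nn.
have := normr_ge0 (x n - p); set A := `|x n - p|; move=> h h'; nra.
Qed.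
End Halpern.

Theorem theorem6 (R : realType) (V : completeNormedModType R)
  (ip : V -> V -> R) (D : set V) (m : nat) (T : 'I_m -> V -> V)
  (N : nat) (Omega : 'I_N -> seq (seq 'I_m)) (w : 'I_N -> seq 'I_m -> R)
  (hw : 'I_N -> R) (lam : nat -> R) (u x0 : V) (x : nat -> V) :
  is_inner_product ip ->
  D !=set0 -> closed D -> convex_subset D ->
  (forall i, maps_into D (T i)) ->
  (forall i, firmly_nonexpansive ip D (T i)) ->
  common_fix D T !=set0 ->
  (0 < N)%N ->
  (forall r, in_M (Omega r) (w r)) ->
  (forall r s, r != s -> ~ same_pair (Omega r) (Omega s) (w r) (w s)) ->
  (forall r, 0 < hw r) -> \sum_(r < N) hw r = 1 ->
  steering lam ->
  D u -> D x0 ->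
  x 0%N = x0 ->
  (forall k, x k.+1 = lam k *: u
               + (1 - lam k) *: \sum_(r < N) hw r *: T_S T (Omega r) (w r) (x k)) ->
  exists2 p, is_metric_proj (common_fix D T) u p & x @ \oo --> p.
Proof.
move=> hip D0 cD cvD TD Tfne F0 N0 hM _ hwpos hwsum hlam Du Dx0 ex0 ex.
pose Uop y := \sum_(r < N) hw r *: T_S T (Omega r) (w r) y.
pose r0 : 'I_N := Ordinal N0.
have cpos : forall r, r \in index_enum 'I_N -> 0 < hw r by move=> r _; exact: hwpos.
have csum : \sum_(r <- index_enum 'I_N) hw r = 1 by rewrite -hwsum.
have sn : index_enum 'I_N != [::].
  by apply/eqP => e; have := mem_index_enum r0; rewrite e.
have UD : forall y, D y -> D (Uop y).
  move=> y Dy; apply: (wsum_D cpos csum D (fun r => T_S T (Omega r) (w r) y) cvD sn).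
  move=> r _; exact: (TS_D _ _ _ TD _ _ (hM r) y cvD Dy).
have Une : forall y y', D y -> D y' -> `|Uop y - Uop y'| <= `|y - y'|.
  move=> y y' Dy Dy'; apply: (wsum_ne cpos csum) => r _.
  exact: (TS_ne hip _ _ _ TD Tfne _ _ (hM r) _ _ Dy Dy').
have FD : forall q, common_fix D T q -> D q by move=> q [].
have UF : forall q, common_fix D T q -> Uop q = q.
  move=> q [Dq Fq]; rewrite /Uop -{2}(wsum_const csum q).
  apply: eq_bigr => r _; rewrite (TS_fix _ _ _ _ (hM r)) //.
  by move=> i; have [] := Fq i.
have FU : forall y, D y -> Uop y = y -> common_fix D T y.
  move=> y Dy Uy; split => //.
  have [p0 [Dp0 Fp0]] := F0.
  have Tp0 : forall i, T i p0 = p0 by move=> i; have [] := Fp0 i.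
  have [h1 h2] := wsum_quasi hip cpos csum (fun r => T_S T (Omega r) (w r) y) p0
    (`|y - p0| ^+ 2) (fun r _ => (TS_quasi hip _ _ _ TD Tfne _ _ (hM r) y p0 Dy Dp0 Tp0).1).
  have h3 : forall r, r \in index_enum 'I_N ->
      `|y - p0| ^+ 2 <= `|T_S T (Omega r) (w r) y - p0| ^+ 2.
    apply: h2.
    have -> : \sum_(r <- index_enum 'I_N) hw r *: T_S T (Omega r) (w r) y = y.
      exact: Uy.
    exact: lexx.
  move=> i; split => //.
  have [_ _ fitr _ _] := hM r0.
  have [t tO it] := fitr i.
  exact: (TS_quasi hip _ _ _ TD Tfne _ _ (hM r0) y p0 Dy Dp0 Tp0).2 (h3 r0 (mem_index_enum _)) t tO i it.
exact: (halpern hip _ _ Uop cD cvD UD Une FD UF FU _ Du _ _ _ hlam Dx0 ex0 ex F0).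
Qed.
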